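(* Let $\mathcal{H}_\mathrm{S}$ (system) and $\mathcal{H}_\mathrm{B}$ (bath) be finite-dimensional Hilbert spaces, $d_\mathrm{B}=\dim\mathcal{H}_\mathrm{B}$, and fix an orthonormal basis $\{|k\rangle\}_{k=1}^{d_\mathrm{B}}$ of $\mathcal{H}_\mathrm{B}$. Let $\mathcal{C}\subseteq\mathcal{H}_\mathrm{S}$ be a subspace (the code) with orthogonal projector $P_\mathcal{C}$. Let $\mathcal{E}$ be a completely positive trace-preserving (CPTP) map on operators on $\mathcal{H}_\mathrm{S}\otimes\mathcal{H}_\mathrm{B}$ with Kraus operators $\{E_a\}_{a=1}^N$. Then $\mathcal{E}$ is perfectly correctable on $\mathcal{C}$ with a CPTP recovery of the form $\mathcal{R}=\mathcal{R}_\mathrm{S}\otimes\mathrm{id}_\mathrm{B}$ if and only if there is a complex matrix $\Lambda$, indexed by triples, which is Hermitian (i.e. $\Lambda_{bmn,ak\ell}=(\Lambda_{ak\ell,bmn})^*$), such that $$P_\mathcal{C}\, E_{a;k\ell}^\dagger E_{b;mn}\,P_\mathcal{C}=\Lambda_{ak\ell,bmn}\,P_\mathcal{C}$$ for all $a,b\in\{1,\dots,N\}$ and all $k,\ell,m,n\in\{1,\dots,d_\mathrm{B}\}$.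
   Context: For an operator $O$ on $\mathcal{H}_\mathrm{S}\otimes\mathcal{H}_\mathrm{B}$, $O_{;k\ell}\equiv\langle k|O|\ell\rangle$ denotes the system operator obtained by taking the partial matrix element in the bath basis, and $O_{;k\ell}^\dagger\equiv(O_{;k\ell})^\dagger$. Let $P=P_\mathcal{C}\otimes\mathbb{1}_\mathrm{B}$. A code state is any density operator $\rho$ on $\mathcal{H}_\mathrm{S}\otimes\mathcal{H}_\mathrm{B}$ with $\rho=P\rho P$ (i.e. supported on $\mathcal{C}\otimes\mathcal{H}_\mathrm{B}$). A recovery is a CPTP map $\mathcal{R}=\mathcal{R}_\mathrm{S}\otimes\mathrm{id}_\mathrm{B}$, where $\mathcal{R}_\mathrm{S}$ is a CPTP map on operators on $\mathcal{H}_\mathrm{S}$ whose outputs are supported on $\mathcal{C}$ (i.e. $\mathcal{R}_\mathrm{S}=P_\mathcal{C}\mathcal{R}_\mathrm{S}(\cdot)P_\mathcal{C}$). $\mathcal{E}$ is perfectly correctable on $\mathcal{C}$ with recovery $\mathcal{R}$ if $\mathrm{Tr}_\mathrm{B}\{(\mathcal{R}\circ\mathcal{E})(\rho)\}=\mathrm{Tr}_\mathrm{B}\{\rho\}$ for every code state $\rho$. *)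

(* Defs.v *)
(* Operators on H_S (dim dS) are dS x dS complex matrices;
   operators on H_S (x) H_B are (dS*dB) x (dS*dB) matrices, the product basis
   |i>|k> being indexed by mxtens_index (i, k) (mathcomp real_closed mxtens). *)
From mathcomp Require Import all_boot all_algebra.
From mathcomp Require Import reals.
From mathcomp.real_closed Require Import complex mxtens.
Set Implicit Arguments. Unset Strict Implicit. Unset Printing Implicit Defensive.
Import GRing.Theory Num.Theory.
Local Open Scope ring_scope.

Section QEC.
Variable C : numClosedFieldType.

Definition dag {m n} (A : 'M[C]_(m, n)) : 'M[C]_(n, m) := (map_mx Num.conj A)^T.

Definition psdmx {n} (A : 'M[C]_n) : Prop :=
  forall v : 'cV[C]_n, 0 <= (dag v *m A *m v) 0 0.

Definition density {n} (rho : 'M[C]_n) : Prop := psdmx rho /\ \tr rho = 1.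

Definition orth_proj {n} (P : 'M[C]_n) : Prop := P *m P = P /\ dag P = P.

(* partial matrix element O_{;kl} = <k| O |l> in the bath basis *)
Definition bath_elem {dS dB} (O : 'M[C]_(dS * dB)) (k l : 'I_dB) : 'M[C]_dS :=
  \matrix_(i, j) O (mxtens_index (i, k)) (mxtens_index (j, l)).

Definition ptraceB {dS dB} (O : 'M[C]_(dS * dB)) : 'M[C]_dS :=
  \sum_(k < dB) bath_elem O k k.

Definition kraus_apply {n N} (K : 'I_N -> 'M[C]_n) (rho : 'M[C]_n) : 'M[C]_n :=
  \sum_(a < N) K a *m rho *m dag (K a).

Definition kraus_TP {n N} (K : 'I_N -> 'M[C]_n) : Prop :=
  \sum_(a < N) dag (K a) *m K a = 1%:M.

Definition CPTP {n} (Phi : 'M[C]_n -> 'M[C]_n) : Prop :=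
  exists (M : nat) (K : 'I_M -> 'M[C]_n),
    kraus_TP K /\ forall X, Phi X = kraus_apply K X.

(* R_S (x) id_B : acts blockwise, (R_S (x) id)(O)_{;kl} = R_S(O_{;kl}) *)
Definition lift_sys {dS dB} (RS : 'M[C]_dS -> 'M[C]_dS) (O : 'M[C]_(dS * dB))
  : 'M[C]_(dS * dB) :=
  \matrix_(p, q) RS (bath_elem O (mxtens_unindex p).2 (mxtens_unindex q).2)
                    (mxtens_unindex p).1 (mxtens_unindex q).1.

Definition code_state {dS dB} (PC : 'M[C]_dS) (rho : 'M[C]_(dS * dB)) : Prop :=
  density rho /\
  rho = (tensmx PC (1%:M : 'M[C]_dB)) *m rho *m (tensmx PC (1%:M : 'M[C]_dB)).

Definition sys_recovery {dS} (PC : 'M[C]_dS) (RS : 'M[C]_dS -> 'M[C]_dS) : Prop :=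
  CPTP RS /\ forall X, RS X = PC *m RS X *m PC.

Definition perfectly_correctable {dS dB N} (PC : 'M[C]_dS)
  (E : 'I_N -> 'M[C]_(dS * dB)) (RS : 'M[C]_dS -> 'M[C]_dS) : Prop :=
  forall rho : 'M[C]_(dS * dB), code_state PC rho ->
    ptraceB (lift_sys RS (kraus_apply E rho)) = ptraceB rho.

End QEC.

(* Main.v *)
Require Import Defs.
From mathcomp Require Import all_boot all_order all_algebra.
From mathcomp Require Import reals ring.
From mathcomp.real_closed Require Import complex mxtens.
Set Implicit Arguments. Unset Strict Implicit. Unset Printing Implicit Defensive.
Import Order.TTheory GRing.Theory Num.Theory.
Local Open Scope ring_scope.

Section Basics.
Variable C : numClosedFieldType.

Lemma sum_tens (V : nmodType) m n (F : 'I_(m * n) -> V) :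
  \sum_(p < m * n) F p = \sum_(i < m) \sum_(k < n) F (mxtens_index (i, k)).
Proof.
rewrite pair_big /= (reindex (@mxtens_index m n)) /=; last first.
  by exists (@mxtens_unindex m n) => i _; rewrite (mxtens_indexK, mxtens_unindexK).
by apply: eq_bigr => -[i k].
Qed.

Lemma dagM m n p (A : 'M[C]_(m, n)) (B : 'M[C]_(n, p)) :
  dag (A *m B) = dag B *m dag A.
Proof. by rewrite /dag map_mxM trmx_mul. Qed.

Lemma dagK m n (A : 'M[C]_(m, n)) : dag (dag A) = A.
Proof.
by apply/matrixP => i j; rewrite !mxE conjCK.
Qed.

Lemma dagD m n (A B : 'M[C]_(m, n)) : dag (A + B) = dag A + dag B.
Proof. by apply/matrixP => i j; rewrite !mxE rmorphD. Qed.

Lemma dagN m n (A : 'M[C]_(m, n)) : dag (- A) = - dag A.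
Proof. by apply/matrixP => i j; rewrite !mxE rmorphN. Qed.

Lemma dagB m n (A B : 'M[C]_(m, n)) : dag (A - B) = dag A - dag B.
Proof. by rewrite dagD dagN. Qed.

Lemma dagZ m n c (A : 'M[C]_(m, n)) : dag (c *: A) = c^* *: dag A.
Proof. by apply/matrixP => i j; rewrite !mxE rmorphM. Qed.

Lemma dag_sum m n (I : finType) (F : I -> 'M[C]_(m, n)) :
  dag (\sum_i F i) = \sum_i dag (F i).
Proof.
apply/matrixP => i j; rewrite !mxE !summxE rmorph_sum.
by apply: eq_bigr => k _; rewrite !mxE.
Qed.

Lemma dag1 n : dag (1%:M : 'M[C]_n) = 1%:M.
Proof. by apply/matrixP => i j; rewrite !mxE eq_sym; case: eqP; rewrite ?conjC1 ?conjC0. Qed.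

Lemma dag0 m n : dag (0 : 'M[C]_(m, n)) = 0.
Proof. by apply/matrixP => i j; rewrite !mxE conjC0. Qed.

Lemma dagE m n (A : 'M[C]_(m, n)) i j : dag A i j = (A j i)^*.
Proof. by rewrite !mxE. Qed.

Lemma dag_tens m n p q (A : 'M[C]_(m, n)) (B : 'M[C]_(p, q)) :
  dag (tensmx A B) = tensmx (dag A) (dag B).
Proof. by apply/matrixP => i j; rewrite !mxE rmorphM. Qed.

Lemma tr_mul_dag m n (A : 'M[C]_(m, n)) :
  \tr (A *m dag A) = \sum_i \sum_j A i j * (A i j)^*.
Proof.
by rewrite /mxtrace; apply: eq_bigr => i _; rewrite mxE; apply: eq_bigr => j _; rewrite !mxE.
Qed.

Lemma tr_mul_dag_ge0 m n (A : 'M[C]_(m, n)) : 0 <= \tr (A *m dag A).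
Proof.
by rewrite tr_mul_dag; apply: sumr_ge0 => i _; apply: sumr_ge0 => j _; apply: mul_conjC_ge0.
Qed.

Lemma tr_mul_dag_eq0 m n (A : 'M[C]_(m, n)) : \tr (A *m dag A) = 0 -> A = 0.
Proof.
rewrite tr_mul_dag => H0; apply/matrixP => i j; rewrite mxE.
have H1 := psumr_eq0P (fun i _ => sumr_ge0 _ (fun j _ => mul_conjC_ge0 (A i j))) H0.
have H2 := psumr_eq0P (fun j _ => mul_conjC_ge0 (A i j)) (H1 i isT).
by apply/eqP; rewrite -mul_conjC_eq0 H2.
Qed.

Lemma tr_mul_dag_gt0 m n (A : 'M[C]_(m, n)) : A != 0 -> 0 < \tr (A *m dag A).
Proof.
move=> nzA; rewrite lt_def tr_mul_dag_ge0 andbT; apply: contra nzA => /eqP.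
by move=> /tr_mul_dag_eq0 ->.
Qed.

Lemma sum_mul_dag_eq0 m n (I : finType) (F : I -> 'M[C]_(m, n)) :
  \sum_i F i *m dag (F i) = 0 -> forall i, F i = 0.
Proof.
move=> H i; apply: tr_mul_dag_eq0.
have : \tr (\sum_i F i *m dag (F i)) = 0 by rewrite H mxtrace0.
rewrite raddf_sum => H0.
exact: (psumr_eq0P (fun i _ => tr_mul_dag_ge0 (F i)) H0).
Qed.

End Basics.
Section Bath.
Variable C : numClosedFieldType.
Variables dS dB : nat.
Local Notation idx := (@mxtens_index dS dB).

Lemma bath_elemE (O : 'M[C]_(dS * dB)) k l i j :
  bath_elem O k l i j = O (idx (i, k)) (idx (j, l)).
Proof. by rewrite mxE. Qed.

Lemma bath_elemM (A B : 'M[C]_(dS * dB)) k l :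
  bath_elem (A *m B) k l = \sum_m bath_elem A k m *m bath_elem B m l.
Proof.
apply/matrixP => i j; rewrite bath_elemE mxE sum_tens summxE exchange_big /=.
apply: eq_bigr => m _; rewrite mxE; apply: eq_bigr => i' _.
by rewrite !bath_elemE.
Qed.

Lemma bath_elem_dag (A : 'M[C]_(dS * dB)) k l :
  bath_elem (dag A) k l = dag (bath_elem A l k).
Proof. by apply/matrixP => i j; rewrite !mxE. Qed.

Lemma bath_elemD (A B : 'M[C]_(dS * dB)) k l :
  bath_elem (A + B) k l = bath_elem A k l + bath_elem B k l.
Proof. by apply/matrixP => i j; rewrite !mxE. Qed.

Lemma bath_elemN (A : 'M[C]_(dS * dB)) k l :
  bath_elem (- A) k l = - bath_elem A k l.
Proof. by apply/matrixP => i j; rewrite !mxE. Qed.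

Lemma bath_elemZ c (A : 'M[C]_(dS * dB)) k l :
  bath_elem (c *: A) k l = c *: bath_elem A k l.
Proof. by apply/matrixP => i j; rewrite !mxE. Qed.

Lemma bath_elem0 k l : bath_elem (0 : 'M[C]_(dS * dB)) k l = 0.
Proof. by apply/matrixP => i j; rewrite !mxE. Qed.

Lemma bath_elem_sum (I : finType) (F : I -> 'M[C]_(dS * dB)) k l :
  bath_elem (\sum_t F t) k l = \sum_t bath_elem (F t) k l.
Proof.
apply/matrixP => i j; rewrite bath_elemE !summxE.
by apply: eq_bigr => t _; rewrite bath_elemE.
Qed.

Lemma bath_elem_tens (X : 'M[C]_dS) (Y : 'M[C]_dB) k l :
  bath_elem (tensmx X Y) k l = Y k l *: X.
Proof. by apply/matrixP => i j; rewrite bath_elemE tensmxE mxE mulrC. Qed.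

Lemma bath_elem1 k l :
  bath_elem (1%:M : 'M[C]_(dS * dB)) k l = (k == l)%:R *: 1%:M.
Proof.
apply/matrixP => i j; rewrite bath_elemE !mxE (can_eq (@mxtens_indexK dS dB)).
rewrite xpair_eqE; case: (i == j); case: (k == l) => /=;
  by rewrite ?mulr1 ?mulr0 ?mul1r ?mul0r.
Qed.

Lemma bath_elem_lift (RS : 'M[C]_dS -> 'M[C]_dS) (O : 'M[C]_(dS * dB)) k l :
  bath_elem (lift_sys RS O) k l = RS (bath_elem O k l).
Proof. by apply/matrixP => i j; rewrite bath_elemE mxE !mxtens_indexK. Qed.

End Bath.

Section Kraus.
Variable C : numClosedFieldType.
Variables n M : nat.
Variable K : 'I_M -> 'M[C]_n.

Lemma kraus_applyD X Y : kraus_apply K (X + Y) = kraus_apply K X + kraus_apply K Y.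
Proof.
by rewrite /kraus_apply -big_split; apply: eq_bigr => a _; rewrite mulmxDr mulmxDl.
Qed.

Lemma kraus_applyZ c X : kraus_apply K (c *: X) = c *: kraus_apply K X.
Proof.
rewrite /kraus_apply scaler_sumr; apply: eq_bigr => a _.
by rewrite -scalemxAr -scalemxAl.
Qed.

Lemma kraus_apply0 : kraus_apply K 0 = 0.
Proof. by rewrite /kraus_apply big1 // => a _; rewrite mulmx0 mul0mx. Qed.

Lemma kraus_applyN X : kraus_apply K (- X) = - kraus_apply K X.
Proof. by rewrite -scaleN1r kraus_applyZ scaleN1r. Qed.

Lemma kraus_apply_sum (I : finType) (F : I -> 'M[C]_n) :
  kraus_apply K (\sum_t F t) = \sum_t kraus_apply K (F t).
Proof.
rewrite /kraus_apply exchange_big; apply: eq_bigr => a _.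
by rewrite mulmx_sumr mulmx_suml.
Qed.

End Kraus.
Section Kapp.
Variable C : numClosedFieldType.
Variable n : nat.

Definition kapp (T : finType) (K : T -> 'M[C]_n) (X : 'M[C]_n) : 'M[C]_n :=
  \sum_t K t *m X *m dag (K t).

Variable T : finType.
Variable K : T -> 'M[C]_n.

Lemma kappD X Y : kapp K (X + Y) = kapp K X + kapp K Y.
Proof.
by rewrite /kapp -big_split; apply: eq_bigr => a _; rewrite mulmxDr mulmxDl.
Qed.

Lemma kappZ c X : kapp K (c *: X) = c *: kapp K X.
Proof.
rewrite /kapp scaler_sumr; apply: eq_bigr => a _.
by rewrite -scalemxAr -scalemxAl.
Qed.

Lemma kapp_sum (I : finType) (F : I -> 'M[C]_n) :
  kapp K (\sum_t F t) = \sum_t kapp K (F t).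
Proof.
rewrite /kapp exchange_big; apply: eq_bigr => a _.
by rewrite mulmx_sumr mulmx_suml.
Qed.

End Kapp.

Section Forward.
Variable C : numClosedFieldType.
Variable n : nat.

Lemma mx_delta_entry m p (A : 'M[C]_(m, n)) (B : 'M[C]_(n, p)) i j r q :
  (A *m delta_mx i j *m B) r q = A r i * B j q.
Proof.
rewrite mxE (bigD1 j) //= big1 ?addr0 => [|s /negPf sj]; last first.
  by rewrite mxE big1 ?mul0r // => u _; rewrite mxE sj andbF mulr0.
rewrite mxE (bigD1 i) //= big1 ?addr0 => [|u /negPf ui]; last first.
  by rewrite mxE ui mulr0.
by rewrite mxE !eqxx mulr1.
Qed.

Lemma orth_projP (PC : 'M[C]_n) : orth_proj PC -> PC *m PC = PC /\ dag PC = PC.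
Proof. by []. Qed.

Lemma trPC_gt0 (PC : 'M[C]_n) : orth_proj PC -> PC != 0 -> 0 < \tr PC.
Proof.
move=> [PP dP] nz; have := tr_mul_dag_gt0 nz.
by rewrite dP PP.
Qed.

Lemma polar m (PC : 'M[C]_n) (B : 'cV[C]_n -> 'cV[C]_n -> 'M[C]_m) :
  (forall x y z, B (x + y) z = B x z + B y z) ->
  (forall x y z, B x (y + z) = B x y + B x z) ->
  (forall c x y, B (c *: x) y = c *: B x y) ->
  (forall c x y, B x (c *: y) = c^* *: B x y) ->
  (forall x, PC *m x = x -> B x x = 0) ->
  forall x y, PC *m x = x -> PC *m y = y -> B x y = 0.
Proof.
move=> BD1 BD2 BZ1 BZ2 H x y Hx Hy.
have h1 : B (x + y) (x + y) = 0 by apply: H; rewrite mulmxDr Hx Hy.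
rewrite BD1 !BD2 (H x Hx) (H y Hy) add0r addr0 in h1.
have h2 : B (x + Num.imaginary *: y) (x + Num.imaginary *: y) = 0.
  by apply: H; rewrite mulmxDr -scalemxAr Hx Hy.
rewrite BD1 !BD2 !BZ1 !BZ2 (H x Hx) (H y Hy) !scaler0 add0r addr0 conjCi in h2.
have e1 : B y x = - B x y by apply/eqP; rewrite -addr_eq0 addrC h1.
rewrite e1 scalerN scaleNr -opprD in h2.
move/eqP: h2; rewrite oppr_eq0 -scalerDl scaler_eq0 => /orP[|/eqP //].
by rewrite -mulr2n mulrn_eq0 /= (negPf (neq0Ci C)).
Qed.

End Forward.
Section Forward2.
Variable C : numClosedFieldType.
Variable n : nat.
Implicit Types PC : 'M[C]_n.
Local Notation e i := (delta_mx i 0 : 'cV[C]_n).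

Lemma dag_delta i : dag (delta_mx i 0 : 'cV[C]_n) = delta_mx 0 i.
Proof.
by apply/matrixP => a b; rewrite !mxE conjC_nat; rewrite !ord1 !eqxx andbT andTb.
Qed.

Lemma phi_all (T : finType) (N : T -> 'M[C]_n) PC : orth_proj PC ->
  (forall psi : 'cV[C]_n, PC *m psi = psi ->
     \sum_t N t *m psi *m dag psi *m dag (N t) = psi *m dag psi) ->
  forall X, kapp (fun t => N t *m PC) X = PC *m X *m PC.
Proof.
move=> [PP dP] H.
pose B (x y : 'cV[C]_n) := \sum_t N t *m x *m dag (N t *m y) - x *m dag y.
have HB : forall x y, PC *m x = x -> PC *m y = y -> B x y = 0.
  apply: (polar (PC := PC)).
  - move=> x y z; rewrite /B mulmxDl opprD addrACA -big_split /=; congr (_ + _).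
    by apply: eq_bigr => t _; rewrite mulmxDr mulmxDl.
  - move=> x y z; rewrite /B dagD mulmxDr opprD addrACA -big_split /=; congr (_ + _).
    by apply: eq_bigr => t _; rewrite mulmxDr dagD mulmxDr.
  - move=> c x y; rewrite /B scalerBr scaler_sumr -scalemxAl; congr (_ - _).
    by apply: eq_bigr => t _; rewrite -!scalemxAr -scalemxAl.
  - move=> c x y; rewrite /B scalerBr scaler_sumr dagZ -scalemxAr; congr (_ - _).
    by apply: eq_bigr => t _; rewrite -scalemxAr dagZ -scalemxAr.
  - move=> x Hx; rewrite /B; apply/eqP; rewrite subr_eq0; apply/eqP.
    rewrite -[RHS](H x Hx); apply: eq_bigr => t _; rewrite dagM !mulmxA //.
move=> Y; rewrite [Y in LHS]matrix_sum_delta [Y in RHS]matrix_sum_delta.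
rewrite kapp_sum mulmx_sumr mulmx_suml; apply: eq_bigr => i _.
rewrite kapp_sum mulmx_sumr mulmx_suml; apply: eq_bigr => j _.
rewrite kappZ -scalemxAr -scalemxAl; congr (_ *: _).
have Hi : PC *m (PC *m e i) = PC *m e i by rewrite mulmxA PP.
have Hj : PC *m (PC *m e j) = PC *m e j by rewrite mulmxA PP.
have := HB _ _ Hi Hj; rewrite /B => /eqP; rewrite subr_eq0 => /eqP Hij.
have Edel : PC *m delta_mx i j *m PC = (PC *m e i) *m dag (PC *m e j).
  by rewrite dagM dP dag_delta !mulmxA -(mulmxA PC (delta_mx i 0)) mul_delta_mx.
rewrite Edel -Hij /kapp; apply: eq_bigr => t _.
by rewrite !dagM dP dag_delta !mulmxA -(mulmxA (N t *m PC) (delta_mx i 0)) mul_delta_mx.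
Qed.

End Forward2.
Section Forward3.
Variable C : numClosedFieldType.
Variable n : nat.
Implicit Types PC : 'M[C]_n.

Lemma code_opP PC X : orth_proj PC -> PC *m X *m PC = X ->
  [/\ PC *m X = X, X *m PC = X, PC *m dag X = dag X & dag X *m PC = dag X].
Proof.
move=> [PP dP] HX.
have h1 : PC *m X = X by rewrite -HX !mulmxA PP.
have h2 : X *m PC = X by rewrite -HX -!mulmxA PP.
have hd : PC *m dag X *m PC = dag X by rewrite -[in RHS]HX !dagM dP mulmxA.
split => //; first by rewrite -hd !mulmxA PP.
by rewrite -hd -!mulmxA PP.
Qed.

Lemma comm_step (T : finType) (M : T -> 'M[C]_n) PC : orth_proj PC ->
  (forall X, kapp M X = PC *m X *m PC) ->
  forall X, PC *m X *m PC = X -> forall t, M t *m X = X *m M t.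
Proof.
move=> oP HM X HX.
have [h1 h2 h3 h4] := code_opP oP HX.
have [PP dP] := oP.
pose F t := M t *m X - X *m M t.
have HF : forall t, F t *m dag (F t) =
   (M t *m (X *m dag X) *m dag (M t) - X *m (M t *m dag X *m dag (M t)))
 - (M t *m X *m dag (M t) *m dag X - X *m (M t *m 1%:M *m dag (M t)) *m dag X).
  move=> t; rewrite /F dagB !dagM mulmxBr !mulmxBl mulmx1 !mulmxA.
  done.
have S0 : \sum_t F t *m dag (F t) = 0.
  under eq_bigr do rewrite HF.
  rewrite !sumrB -!mulmx_sumr -!mulmx_suml -!mulmx_sumr.
  have := HM (X *m dag X); rewrite /kapp => ->.
  have := HM (dag X); rewrite /kapp => ->.
  have := HM X; rewrite /kapp => ->.
  have := HM 1%:M; rewrite /kapp => ->.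
  rewrite mulmx1 PP !mulmxA !h1 !h2 -!mulmxA !h4.
  by rewrite !subrr ?subr0.
move=> t; have := sum_mul_dag_eq0 S0 t; rewrite /F => /eqP; rewrite subr_eq0 => /eqP //.
Qed.

Lemma scalar_step (M PC : 'M[C]_n) : orth_proj PC -> PC != 0 -> M *m PC = M ->
  (forall X, PC *m X *m PC = X -> M *m X = X *m M) ->
  M = (\tr M / \tr PC) *: PC.
Proof.
move=> oP nz MP HC; have [PP dP] := oP.
have tPC : \tr PC != 0 by rewrite gt_eqF // trPC_gt0.
have PCM : PC *m M = M by rewrite -(HC PC) ?MP // PP PP.
have key : forall Y, M *m Y *m PC = PC *m Y *m M.
  move=> Y; have := HC (PC *m Y *m PC).
  rewrite !mulmxA PP -!mulmxA PP => /(_ erefl).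
  by rewrite !mulmxA MP -!mulmxA PCM.
have e : forall p i, M p i * \tr PC = PC p i * \tr M.
  move=> p i; rewrite /mxtrace !mulr_sumr; apply: eq_bigr => j _.
  by rewrite -mx_delta_entry key mx_delta_entry.
apply/matrixP => p i; rewrite mxE.
by apply: (mulIf tPC); rewrite e mulrAC mulfVK // mulrC.
Qed.

Lemma KEY (T : finType) (N : T -> 'M[C]_n) PC : orth_proj PC -> PC != 0 ->
  (forall psi : 'cV[C]_n, PC *m psi = psi ->
     \sum_t N t *m psi *m dag psi *m dag (N t) = psi *m dag psi) ->
  forall t, N t *m PC = (\tr (N t *m PC) / \tr PC) *: PC.
Proof.
move=> oP nz H t; have [PP dP] := oP.
apply: scalar_step => //; first by rewrite -mulmxA PP.
by move=> X HX; exact: (comm_step oP (phi_all oP H) HX t).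
Qed.

End Forward3.
Section Top.
Variable C : numClosedFieldType.
Variables dS dB : nat.

Lemma triple_sum (V : nmodType) (I J K : finType) (f : I * (J * K) -> V) :
  \sum_t f t = \sum_i \sum_j \sum_k f (i, (j, k)).
Proof.
transitivity (\sum_i \sum_(p : J * K) f (i, p)).
  by rewrite pair_big; apply: eq_bigr => -[i p].
by apply: eq_bigr => i _; rewrite pair_big; apply: eq_bigr => -[j k].
Qed.

Lemma ptrace_formula N L (E : 'I_N -> 'M[C]_(dS * dB)) (K : 'I_L -> 'M[C]_dS)
  (RS : 'M[C]_dS -> 'M[C]_dS) (HRS : forall X, RS X = kraus_apply K X) rho :
  ptraceB (lift_sys RS (kraus_apply E rho)) =
  \sum_k kraus_apply K (\sum_a \sum_m \sum_n
     bath_elem (E a) k m *m bath_elem rho m n *m dag (bath_elem (E a) k n)).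
Proof.
rewrite /ptraceB; apply: eq_bigr => k _; rewrite bath_elem_lift HRS.
congr (kraus_apply K _).
rewrite /kraus_apply bath_elem_sum; apply: eq_bigr => a _.
rewrite bath_elemM exchange_big /=.
under eq_bigr do rewrite bath_elemM mulmx_suml bath_elem_dag.
by rewrite exchange_big.
Qed.

Lemma mxtrace_tens (A : 'M[C]_dS) (B : 'M[C]_dB) : \tr (tensmx A B) = \tr A * \tr B.
Proof.
rewrite /mxtrace sum_tens mulr_suml; apply: eq_bigr => i _.
by rewrite mulr_sumr; apply: eq_bigr => k _; rewrite tensmxE.
Qed.

Lemma tr_delta (l : 'I_dB) : \tr (delta_mx l l : 'M[C]_dB) = 1.
Proof.
rewrite /mxtrace (bigD1 l) //= big1 ?addr0 => [|i /negPf il]; first by rewrite mxE eqxx.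
by rewrite mxE il.
Qed.

Lemma code_vec_state (PC : 'M[C]_dS) (psi : 'cV[C]_dS) (l : 'I_dB) :
  orth_proj PC -> PC *m psi = psi -> psi != 0 ->
  code_state PC ((\tr (psi *m dag psi))^-1 *: tensmx (psi *m dag psi) (delta_mx l l)).
Proof.
move=> [PP dP] Hpsi nz.
set s := (\tr (psi *m dag psi))^-1.
have tpos := tr_mul_dag_gt0 nz.
have s_ge0 : 0 <= s by rewrite invr_ge0 ltW.
have Etens : tensmx (psi *m dag psi) (delta_mx l l : 'M[C]_dB) =
   tensmx psi (delta_mx l 0 : 'cV[C]_dB) *m dag (tensmx psi (delta_mx l 0 : 'cV[C]_dB)).
  by rewrite dag_tens dag_delta tensmx_mul mul_delta_mx.
split; [split|].
- move=> v; rewrite Etens -scalemxAr -scalemxAl mxE mulr_ge0 //.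
  set Psi := tensmx psi (delta_mx l 0 : 'cV[C]_dB).
  have -> : dag v *m (Psi *m dag Psi) *m v = (dag v *m Psi) *m dag (dag v *m Psi).
    by rewrite dagM dagK !mulmxA.
  rewrite -trace_mx11; exact: tr_mul_dag_ge0.
- by rewrite mxtraceZ mxtrace_tens tr_delta mulr1 mulVf // gt_eqF.
- rewrite -scalemxAr -scalemxAl !tensmx_mul mul1mx mulmx1 mulmxA Hpsi -mulmxA.
  have -> : dag psi *m PC = dag psi by rewrite -dP -dagM Hpsi.
  by [].
Qed.

End Top.
Section ForwardMain.
Variable C : numClosedFieldType.
Variables dS dB N : nat.

Lemma forward (PC : 'M[C]_dS) (E : 'I_N -> 'M[C]_(dS * dB)) :
  orth_proj PC -> PC != 0 ->
  (exists RS : 'M[C]_dS -> 'M[C]_dS,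
      sys_recovery PC RS /\ perfectly_correctable PC E RS) ->
  (exists Lam : 'I_N -> 'I_dB -> 'I_dB -> 'I_N -> 'I_dB -> 'I_dB -> C,
      (forall a k l b m n, Lam b m n a k l = Num.conj (Lam a k l b m n)) /\
      (forall a k l b m n,
          PC *m dag (bath_elem (E a) k l) *m bath_elem (E b) m n *m PC
          = Lam a k l b m n *: PC)).
Proof.
move=> oP nz [RS [[[L [K [TPK HRS]]] _] corr]].
have [PP dP] := oP.
pose Nop (l : 'I_dB) (t : 'I_dB * ('I_L * 'I_N)) :=
  K t.2.1 *m bath_elem (E t.2.2) t.1 l.
have HK : forall l (psi : 'cV[C]_dS), PC *m psi = psi ->
    \sum_t Nop l t *m psi *m dag psi *m dag (Nop l t) = psi *m dag psi.
  move=> l psi Hpsi; have [->|nzpsi] := eqVneq psi 0.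
    by rewrite dag0 !mulmx0 big1 // => t _; rewrite mulmx0 mul0mx.
  have cs := code_vec_state l oP Hpsi nzpsi.
  set s := (\tr (psi *m dag psi))^-1 in cs.
  have s_nz : s != 0 by rewrite invr_eq0 gt_eqF // tr_mul_dag_gt0.
  have := corr _ cs; rewrite (ptrace_formula E HRS).
  set rho := s *: _.
  have Erho : forall m n, bath_elem rho m n =
      (delta_mx l l : 'M[C]_dB) m n *: (s *: (psi *m dag psi)).
    by move=> m n; rewrite bath_elemZ bath_elem_tens scalerA mulrC -scalerA.
  have L1 : forall k, \sum_a \sum_m \sum_n bath_elem (E a) k m *m bath_elem rho m n
        *m dag (bath_elem (E a) k n) =
      s *: \sum_a bath_elem (E a) k l *m (psi *m dag psi) *m dag (bath_elem (E a) k l).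
    move=> k; rewrite scaler_sumr; apply: eq_bigr => a _.
    rewrite (bigD1 l) //= [X in _ + X]big1 ?addr0 => [|m /negPf ml]; last first.
      by apply: big1 => n _; rewrite Erho mxE ml /= scale0r mulmx0 mul0mx.
    rewrite (bigD1 l) //= [X in _ + X]big1 ?addr0 => [|n /negPf nl]; last first.
      by rewrite Erho mxE nl andbF scale0r mulmx0 mul0mx.
    by rewrite Erho mxE !eqxx scale1r -scalemxAr -scalemxAl.
  under eq_bigr do rewrite L1 kraus_applyZ.
  rewrite -scaler_sumr /ptraceB.
  under [in RHS]eq_bigr do rewrite Erho mxE.
  have -> : \sum_(i < dB) ((i == l) && (i == l))%:R *: (s *: (psi *m dag psi)) =
     s *: (psi *m dag psi).
    rewrite (bigD1 l) //= big1 ?addr0 ?eqxx ?scale1r // => i /negPf il.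
    by rewrite il scale0r.
  move/(scalerI s_nz) => <-.
  rewrite triple_sum; apply: eq_bigr => k _.
  rewrite /kraus_apply; apply: eq_bigr => r _.
  rewrite mulmx_sumr mulmx_suml; apply: eq_bigr => a _.
  by rewrite /Nop /= !dagM !mulmxA.
pose c (l : 'I_dB) t := \tr (Nop l t *m PC) / \tr PC.
have Hc : forall l t, Nop l t *m PC = c l t *: PC.
  by move=> l; apply: (KEY oP nz (HK l)).
exists (fun a k l b m n => \sum_r (c l (k, (r, a)))^* * c n (m, (r, b))).
split.
  move=> a k l b m n; rewrite rmorph_sum; apply: eq_bigr => r _.
  by rewrite rmorphM /= conjCK mulrC.
move=> a k l b m n; rewrite -(mulmxA PC).
have -> : dag (bath_elem (E a) k l) *m bath_elem (E b) m n =
  \sum_r dag (K r *m bath_elem (E a) k l) *m (K r *m bath_elem (E b) m n).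
  move: (TPK); rewrite /kraus_TP => TPK'.
  rewrite -[dag (bath_elem (E a) k l)]mulmx1 -TPK'.
  rewrite mulmx_sumr mulmx_suml; apply: eq_bigr => r _.
  by rewrite dagM !mulmxA.
rewrite mulmx_sumr mulmx_suml scaler_suml; apply: eq_bigr => r _.
have h1 := Hc l (k, (r, a)); have h2 := Hc n (m, (r, b)); rewrite /Nop /= in h1 h2.
set X := K r *m bath_elem (E a) k l; set Y := K r *m bath_elem (E b) m n.
have -> : PC *m (dag X *m Y) *m PC = dag (X *m PC) *m (Y *m PC) by rewrite dagM dP !mulmxA.
rewrite h1 h2.
by rewrite dagZ dP -scalemxAr -scalemxAl PP scalerA mulrC.
Qed.

End ForwardMain.
Section RevPrelim.
Variable C : numClosedFieldType.

Lemma dag_deltaG m n (i : 'I_m) (j : 'I_n) : dag (delta_mx i j : 'M[C]_(m, n)) = delta_mx j i.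
Proof. by apply/matrixP => a b; rewrite !mxE conjC_nat andbC. Qed.

Lemma sum_delta_diag n : \sum_(j < n) (delta_mx j j : 'M[C]_n) = 1%:M.
Proof.
apply/matrixP => a b; rewrite summxE !mxE (bigD1 a) //= big1 ?addr0.
  by rewrite mxE eqxx /= eq_sym.
by move=> j /negPf ja; rewrite mxE eq_sym ja.
Qed.

Lemma col_entry m n (A : 'M[C]_(m, n)) i j : (A *m (delta_mx j 0 : 'cV[C]_n)) i 0 = A i j.
Proof.
rewrite mxE (bigD1 j) //= big1 ?addr0; first by rewrite mxE !eqxx mulr1.
by move=> k /negPf kj; rewrite mxE kj mulr0.
Qed.

Lemma splitL m n (r : 'I_m) : split (lshift n r) = inl r.
Proof. exact: (@unsplitK m n (inl r)). Qed.

Lemma splitR m n (r : 'I_n) : split (rshift m r) = inr r.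
Proof. exact: (@unsplitK m n (inr r)). Qed.

Lemma invmx_dag n (U : 'M[C]_n) : U \is unitarymx -> invmx U = dag U.
Proof. by move=> Uu; rewrite invmx_unitary //; apply/matrixP => i j; rewrite !mxE. Qed.

End RevPrelim.

Section Rev.
Variable C : numClosedFieldType.
Variable n : nat.
Variable T : finType.

Lemma REV (PC : 'M[C]_n) (F : T -> 'M[C]_n) (Lam : T -> T -> C) :
  orth_proj PC -> PC != 0 -> (forall i, F i *m PC = F i) ->
  (forall i j, Lam j i = (Lam i j)^*) ->
  (forall i j, dag (F i) *m F j = Lam i j *: PC) ->
  exists L (K : 'I_L -> 'M[C]_n) (g : 'I_L -> T -> C),
   [/\ kraus_TP K, (forall r, PC *m K r = K r),
       (forall r i, K r *m F i = g r i *: PC) &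
       (forall i j, \sum_r g r i * (g r j)^* = Lam j i)].
Proof.
move=> oP nz FP Lh FF; have [PP dP] := oP.
have tPC := trPC_gt0 oP nz.
pose A : 'M[C]_#|T| := \matrix_(p, q) Lam (enum_val p) (enum_val q).
have Aherm : A \is hermsymmx.
  by apply/is_hermitianmxP; rewrite expr0 scale1r; apply/matrixP => p q; rewrite !mxE Lh.
have /orthomx_spectralP := hermitian_normalmx Aherm.
set U := spectralmx A; set d := spectral_diag A => Aeq.
have Uu : U \is unitarymx by apply: spectral_unitarymx.
have Uunit : U \in unitmx by apply: spectral_unit.
have UW : U *m dag U = 1%:M by rewrite -invmx_dag // mulmxV.
have WU : dag U *m U = 1%:M by rewrite -invmx_dag // mulVmx.
rewrite invmx_dag // in Aeq.
have Deq : U *m A *m dag U = diag_mx d.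
  by rewrite Aeq !mulmxA UW mul1mx -mulmxA UW mulmx1.
pose G (r : 'I_#|T|) := \sum_p (dag U) p r *: F (enum_val p).
have GG : forall r s, dag (G r) *m G s = (diag_mx d) r s *: PC.
  move=> r s; rewrite -Deq /G dag_sum mulmx_suml.
  under eq_bigr do rewrite mulmx_sumr.
  rewrite exchange_big /= mxE scaler_suml; apply: eq_bigr => q _.
  rewrite [(U *m A) _ _]mxE mulr_suml scaler_suml; apply: eq_bigr => p _.
  rewrite dagZ -scalemxAr -scalemxAl FF !scalerA !mxE conjCK; congr (_ *: _).
  by ring.
have FG : forall i, F i = \sum_r U r (enum_rank i) *: G r.
  move=> i; rewrite /G.
  transitivity (\sum_p (dag U *m U) p (enum_rank i) *: F (enum_val p)).
    rewrite WU (bigD1 (enum_rank i)) //= big1 ?addr0; first by rewrite mxE eqxx scale1r enum_rankK.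
    by move=> p /negPf pi; rewrite mxE pi scale0r.
  under [in RHS]eq_bigr do rewrite scaler_sumr.
  rewrite exchange_big /=; apply: eq_bigr => p _.
  rewrite mxE scaler_suml; apply: eq_bigr => r _; by rewrite scalerA mulrC.
have GPC : forall r, G r *m PC = G r.
  move=> r; rewrite /G mulmx_suml; apply: eq_bigr => p _.
  by rewrite -scalemxAl FP.
pose dd (r : 'I_#|T|) : C := d 0 r.
have GGd : forall r s, dag (G r) *m G s = ((r == s)%:R * dd r) *: PC.
  by move=> r s; rewrite GG mxE mulr_natl.
have dge0 : forall r, 0 <= dd r.
  move=> r; have := congr1 mxtrace (GGd r r); rewrite eqxx mul1r mxtraceZ => e.
  rewrite -(pmulr_lge0 _ tPC) -e -[X in _ *m X]dagK; exact: tr_mul_dag_ge0.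
have Gz : forall r, dd r = 0 -> G r = 0.
  move=> r d0; have := congr1 mxtrace (GGd r r); rewrite eqxx mul1r d0 scale0r mxtrace0.
  by rewrite -[X in _ *m X]dagK => /tr_mul_dag_eq0 H; rewrite -[G r]dagK H dag0.
have dreal : forall r, (dd r)^* = dd r by move=> r; apply: geC0_conj.
pose w r := (dd r)^-1.
have wreal : forall r, (w r)^* = w r by move=> r; rewrite /w fmorphV /= dreal.
have wdd : forall r, w r * dd r * dd r = dd r.
  move=> r; have [d0|dn0] := eqVneq (dd r) 0; first by rewrite d0 !mulr0.
  by rewrite /w mulVf // mul1r.
have wdG : forall r, (w r * dd r) *: G r = G r.
  move=> r; have [d0|dn0] := eqVneq (dd r) 0; first by rewrite (Gz _ d0) scaler0.
  by rewrite /w mulVf // scale1r.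
pose bt r := sqrtC (w r).
have btreal : forall r, (bt r)^* = bt r.
  by move=> r; apply: geC0_conj; rewrite sqrtC_ge0 invr_ge0.
have btbt : forall r, bt r * bt r = w r by move=> r; rewrite -expr2 sqrtCK.
pose Pi := \sum_r w r *: (G r *m dag (G r)).
have PiG : forall s, Pi *m G s = G s.
  move=> s; rewrite /Pi mulmx_suml (bigD1 s) //= big1 ?addr0.
    by rewrite -scalemxAl -mulmxA GGd eqxx mul1r -scalemxAr GPC scalerA wdG.
  move=> r /negPf rs; rewrite -scalemxAl -mulmxA GGd rs mul0r scale0r mulmx0.
  by rewrite scaler0.
have PiF : forall i, Pi *m F i = F i.
  move=> i; rewrite [in RHS]FG FG mulmx_sumr; apply: eq_bigr => r _.
  by rewrite -scalemxAr PiG.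
have Pidag : dag Pi = Pi.
  rewrite /Pi dag_sum; apply: eq_bigr => r _; by rewrite dagZ dagM dagK wreal.
have PiPi : Pi *m Pi = Pi.
  rewrite {2}/Pi mulmx_sumr; apply: eq_bigr => r _.
  by rewrite -scalemxAr mulmxA PiG.
pose Q := 1%:M - Pi.
have QQ : dag Q *m Q = Q.
  rewrite /Q dagB dag1 Pidag mulmxBl mul1mx mulmxBr mulmx1 PiPi subrr subr0 //.
have QF : forall i, Q *m F i = 0 by move=> i; rewrite /Q mulmxBl mul1mx PiF subrr.
have [j0 vnz] : exists j0, PC *m (delta_mx j0 0 : 'cV[C]_n) != 0.
  case: (pickP (fun j => PC *m (delta_mx j 0 : 'cV[C]_n) != 0)) => [j Hj|H].
    by exists j.
  case/eqP: nz; apply/matrixP => i j; have := H j; rewrite /= => /negbFE /eqP Hj.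
  by rewrite -col_entry Hj !mxE.
set v := PC *m (delta_mx j0 0 : 'cV[C]_n) in vnz.
have Pv : PC *m v = v by rewrite /v mulmxA PP.
set nu := \tr (v *m dag v).
have nu_gt0 : 0 < nu := tr_mul_dag_gt0 vnz.
pose sg := (sqrtC nu)^-1.
have sgreal : sg^* = sg by apply: geC0_conj; rewrite invr_ge0 sqrtC_ge0 ltW.
have sgsg : sg * sg = nu^-1 by rewrite -expr2 exprVn sqrtCK.
pose c := sg *: v.
have cc : dag c *m c = 1%:M.
  rewrite /c dagZ -scalemxAl -scalemxAr scalerA sgreal sgsg.
  rewrite [dag v *m v]mx11_scalar -trace_mx11 mxtrace_mulC -/nu.
  by rewrite scale_scalar_mx mulVf // gt_eqF.
have Pc : PC *m c = c by rewrite /c -scalemxAr Pv.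
have PCdG : forall r, PC *m dag (G r) = dag (G r) by move=> r; rewrite -dP -dagM GPC.
pose K1 r := bt r *: (PC *m dag (G r)).
pose K2 (j : 'I_n) := c *m delta_mx 0 j *m Q.
pose K (t : 'I_(#|T| + n)) := match split t with inl r => K1 r | inr j => K2 j end.
pose g (t : 'I_(#|T| + n)) (i : T) :=
  match split t with inl r => bt r * dd r * U r (enum_rank i) | inr _ => 0 end.
exists (#|T| + n)%N, K, g; split.
- rewrite /kraus_TP big_split_ord /=.
  under eq_bigr do rewrite /K splitL.
  under [X in _ + X]eq_bigr do rewrite /K splitR.
  have -> : \sum_(r < #|T|) dag (K1 r) *m K1 r = Pi.
    apply: eq_bigr => r _; rewrite /K1 PCdG dagZ dagK -scalemxAl -scalemxAr.
    by rewrite scalerA btreal btbt.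
  have -> : \sum_(j < n) dag (K2 j) *m K2 j = Q.
    rewrite -[RHS]QQ -[dag Q in RHS]mulmx1 -sum_delta_diag mulmx_sumr mulmx_suml.
    apply: eq_bigr => j _; rewrite /K2 !dagM dag_deltaG !mulmxA.
    by rewrite -(mulmxA _ (dag c)) cc mulmx1 -(mulmxA _ (delta_mx j 0)) mul_delta_mx.
  by rewrite /Q addrC subrK.
- move=> t; rewrite /K; case: (split t) => [r|j].
    by rewrite /K1 -scalemxAr mulmxA PP.
  by rewrite /K2 !mulmxA Pc.
- move=> t i; rewrite /K /g; case: (split t) => [r|j].
    rewrite /K1 -scalemxAl -mulmxA [F i]FG mulmx_sumr (bigD1 r) //= big1 ?addr0.
      rewrite -scalemxAr GGd eqxx mul1r scalerA -scalemxAr PP scalerA.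
      by congr (_ *: _); ring.
    by move=> s /negPf sr; rewrite -scalemxAr GGd eq_sym sr mul0r scale0r scaler0.
  by rewrite /K2 -!mulmxA QF !mulmx0 scale0r.
- move=> i j; rewrite big_split_ord /= [X in _ + X]big1 ?addr0; last first.
    by move=> t _; rewrite /g splitR mul0r.
  have -> : Lam j i = A (enum_rank j) (enum_rank i) by rewrite mxE !enum_rankK.
  rewrite Aeq mxE; apply: eq_bigr => r _; rewrite /g splitL mul_mx_diag !mxE.
  rewrite !rmorphM /= btreal dreal.
  transitivity (bt r * bt r * dd r * dd r * U r (enum_rank i) * (U r (enum_rank j))^*).
    by ring.
  by rewrite btbt wdd [LHS]mulrC mulrA.
Qed.

End Rev.
Section TopHelpers.
Variable C : numClosedFieldType.

Lemma sum_oneR m p d (G : 'I_d -> 'M[C]_(m, p)) (X : 'M[C]_p) (n : 'I_d) :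
  \sum_y G y *m ((1%:M : 'M[C]_d) y n *: X) = G n *m X.
Proof.
rewrite (bigD1 n) //= [X in _ + X]big1 ?addr0; first by rewrite mxE eqxx scale1r.
by move=> y /negPf yn; rewrite mxE yn scale0r mulmx0.
Qed.

Lemma sum_oneL m p d (G : 'I_d -> 'M[C]_(m, p)) (X : 'M[C]_m) (n : 'I_d) :
  \sum_y ((1%:M : 'M[C]_d) n y *: X) *m G y = X *m G n.
Proof.
rewrite (bigD1 n) //= [X in _ + X]big1 ?addr0; first by rewrite mxE eqxx scale1r.
by move=> y /negPf yn; rewrite mxE eq_sym yn scale0r mul0mx.
Qed.

Lemma scal_cancel n (PC : 'M[C]_n) a b : PC != 0 -> a *: PC = b *: PC -> a = b.
Proof.
move=> nz H; apply/eqP; rewrite -subr_eq0.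
have /eqP : (a - b) *: PC = 0 by rewrite scalerBl H subrr.
by rewrite scaler_eq0 (negPf nz) orbF.
Qed.

End TopHelpers.

Theorem theorem1 (R : realType) (dS dB N : nat) (PC : 'M[R[i]]_dS)
    (E : 'I_N -> 'M[R[i]]_(dS * dB)) :
  orth_proj PC -> PC != 0 -> kraus_TP E ->
  (exists RS : 'M[R[i]]_dS -> 'M[R[i]]_dS,
      sys_recovery PC RS /\ perfectly_correctable PC E RS)
  <->
  (exists Lam : 'I_N -> 'I_dB -> 'I_dB -> 'I_N -> 'I_dB -> 'I_dB -> R[i],
      (forall a k l b m n, Lam b m n a k l = Num.conj (Lam a k l b m n)) /\
      (forall a k l b m n,
          PC *m dag (bath_elem (E a) k l) *m bath_elem (E b) m n *m PC
          = Lam a k l b m n *: PC)).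
Proof.
move=> oP nz TPE; split; first exact: forward.
move=> [Lam [Lh KL]].
have [PP dP] := oP.
pose F (x : 'I_N * 'I_dB * 'I_dB) := bath_elem (E x.1.1) x.1.2 x.2 *m PC.
pose Lm (x y : 'I_N * 'I_dB * 'I_dB) := Lam x.1.1 x.1.2 x.2 y.1.1 y.1.2 y.2.
have [L [K [g [TPK PK KF gs]]]] : exists L (K : 'I_L -> 'M[R[i]]_dS) (g : 'I_L -> _ -> R[i]),
   [/\ kraus_TP K, (forall r, PC *m K r = K r),
       (forall r i, K r *m F i = g r i *: PC) &
       (forall i j, \sum_r g r i * (g r j)^* = Lm j i)].
  apply: REV => //.
  - by move=> x; rewrite /F -mulmxA PP.
  - by move=> x y; exact: Lh.
  - by move=> x y; rewrite /F dagM dP !mulmxA; exact: KL.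
have TPsum : forall n m, \sum_k \sum_a Lam a k n a k m = (n == m)%:R.
  move=> n m; apply: (scal_cancel nz).
  move: (TPE); rewrite /kraus_TP => TPE'.
  have := congr1 (fun M => PC *m bath_elem M n m *m PC) TPE'.
  rewrite /= bath_elem1 -scalemxAr -scalemxAl mulmx1 PP => <-.
  rewrite bath_elem_sum mulmx_sumr mulmx_suml exchange_big /= scaler_suml.
  apply: eq_bigr => a _; rewrite bath_elemM mulmx_sumr mulmx_suml scaler_suml.
  apply: eq_bigr => k _; rewrite bath_elem_dag mulmxA -KL.
  by rewrite ?mulmxA.
exists (kraus_apply K); split.
  split.
    by exists L, K; split.
  move=> X; rewrite /kraus_apply mulmx_sumr mulmx_suml; apply: eq_bigr => t _.
  have dK : dag (K t) *m PC = dag (K t) by rewrite -dP -dagM PK.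
  by rewrite !mulmxA PK -[RHS]mulmxA dK.
move=> rho [_ Hcode].
have Hb : forall m n, bath_elem rho m n = PC *m bath_elem rho m n *m PC.
  move=> m n; rewrite [in LHS]Hcode bath_elemM.
  under eq_bigr do rewrite bath_elem_tens.
  rewrite sum_oneR bath_elemM.
  under eq_bigr do rewrite bath_elem_tens.
  by rewrite sum_oneL.
have term : forall a k m n, kraus_apply K (bath_elem (E a) k m *m bath_elem rho m n
      *m dag (bath_elem (E a) k n)) = Lam a k n a k m *: bath_elem rho m n.
  move=> a k m n; rewrite /kraus_apply.
  transitivity (\sum_t (g t (a, k, m) * (g t (a, k, n))^*) *: bath_elem rho m n).
    apply: eq_bigr => t _.
    have -> : K t *m (bath_elem (E a) k m *m bath_elem rho m n *m dag (bath_elem (E a) k n))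
        *m dag (K t) = (K t *m F (a, k, m)) *m bath_elem rho m n *m dag (K t *m F (a, k, n)).
      by rewrite [in LHS]Hb /F !dagM dP !mulmxA.
    rewrite !KF dagZ dP -?scalemxAl -?scalemxAr -?scalemxAl -?scalemxAr !scalerA -Hb.
    by rewrite mulrC.
  by rewrite -scaler_suml gs.
rewrite (ptrace_formula E (fun X => erefl (kraus_apply K X))) /ptraceB.
have KA : forall k, kraus_apply K (\sum_a \sum_m \sum_n bath_elem (E a) k m
     *m bath_elem rho m n *m dag (bath_elem (E a) k n)) =
     \sum_a \sum_m \sum_n Lam a k n a k m *: bath_elem rho m n.
  move=> k; rewrite kraus_apply_sum; apply: eq_bigr => a _.
  rewrite kraus_apply_sum; apply: eq_bigr => m _.
  rewrite kraus_apply_sum; apply: eq_bigr => n _.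
  exact: term.
under eq_bigr do rewrite KA.
transitivity (\sum_m \sum_n (\sum_k \sum_a Lam a k n a k m) *: bath_elem rho m n).
  under [in RHS]eq_bigr do under eq_bigr do rewrite scaler_suml.
  under [in RHS]eq_bigr do under eq_bigr do under eq_bigr do rewrite scaler_suml.
  under eq_bigr do rewrite exchange_big.
  under eq_bigr do under eq_bigr do rewrite exchange_big.
  rewrite exchange_big.
  by under eq_bigr do rewrite exchange_big.
apply: eq_bigr => m _.
under eq_bigr do rewrite TPsum.
rewrite (bigD1 m) //= [X in _ + X]big1 ?addr0 ?eqxx ?scale1r // => n /negPf nm.
by rewrite nm scale0r.
Qed.
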